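(* Let $\Lambda$ be a complex $m\times N$ matrix and let $\pi$ be an $N\times N$ real diagonal matrix with strictly positive diagonal entries. Let $\Gamma_{mp}$ be the Moore–Penrose inverse of $\Lambda$, let $M:=\Gamma_{mp}\Lambda$ (so $M=M^\dagger=M^2$), and define $$\Gamma_{opt}:=\Gamma_{mp}-\big[(I-M)\pi(I-M)\big]^{\ddagger}\,\pi M\,\Gamma_{mp},$$ where $X^{\ddagger}$ denotes the Moore–Penrose inverse of $X$ and $I$ is the $N\times N$ identity. Then $\Gamma_{opt}$ is a minimum norm g-inverse of $\Lambda$ with respect to $\pi$, i.e. $\Lambda\Gamma_{opt}\Lambda=\Lambda$ and $\pi\Gamma_{opt}\Lambda=\Lambda^\dagger\Gamma_{opt}^\dagger\pi$.
   Context: $\dagger$ denotes the conjugate transpose. The Moore–Penrose inverse $\Gamma_{mp}$ of $\Lambda$ is the unique $N\times m$ matrix satisfying $\Lambda\Gamma_{mp}\Lambda=\Lambda$, $\Gamma_{mp}\Lambda\Gamma_{mp}=\Gamma_{mp}$, $(\Gamma_{mp}\Lambda)^\dagger=\Gamma_{mp}\Lambda$, $(\Lambda\Gamma_{mp})^\dagger=\Lambda\Gamma_{mp}$. A g-inverse of $\Lambda$ is any $N\times m$ matrix $\Gamma$ with $\Lambda\Gamma\Lambda=\Lambda$. *)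

(* Defs.v *)
(* Complex scalars: an arbitrary numClosedFieldType C
   (e.g. algC), with conjugation Num.conj. *)
From HB Require Import structures.
From mathcomp Require Import all_boot all_order all_algebra.
Set Implicit Arguments. Unset Strict Implicit. Unset Printing Implicit Defensive.
Import Order.TTheory GRing.Theory Num.Theory.
Local Open Scope ring_scope.

Definition ctmx (C : numClosedFieldType) (m n : nat) (A : 'M[C]_(m, n)) : 'M[C]_(n, m) :=
  (map_mx Num.conj A)^T.

Definition is_ginv (C : numClosedFieldType) (m n : nat)
  (A : 'M[C]_(m, n)) (G : 'M[C]_(n, m)) : Prop :=
  A *m G *m A = A.

Definition is_MPinv (C : numClosedFieldType) (m n : nat)
  (A : 'M[C]_(m, n)) (G : 'M[C]_(n, m)) : Prop :=
  [/\ A *m G *m A = A, G *m A *m G = G,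
      ctmx (G *m A) = G *m A & ctmx (A *m G) = A *m G].

(* Main.v *)
Require Import Defs.
From HB Require Import structures.
From mathcomp Require Import all_boot all_order all_algebra.
Import Order.TTheory GRing.Theory Num.Theory.
Local Open Scope ring_scope.

Set Implicit Arguments.

Section H.
Variable C : numClosedFieldType.

Lemma ctmxM m n p (A : 'M[C]_(m,n)) (B : 'M[C]_(n,p)) : ctmx (A *m B) = ctmx B *m ctmx A.
Proof. by rewrite /ctmx map_mxM trmx_mul. Qed.
Lemma ctmxB m n (A B : 'M[C]_(m,n)) : ctmx (A - B) = ctmx A - ctmx B.
Proof. by rewrite /ctmx map_mxB linearB. Qed.
Lemma ctmxK m n (A : 'M[C]_(m,n)) : ctmx (ctmx A) = A.
Proof. by apply/matrixP=> i j; rewrite /ctmx !mxE conjCK. Qed.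
Lemma ctmx1 n : ctmx (1%:M : 'M[C]_n) = 1%:M.
Proof. by rewrite /ctmx map_mx1 trmx1. Qed.
Lemma ctmx0 m n : ctmx (0 : 'M[C]_(m,n)) = 0.
Proof. by apply/matrixP=> i j; rewrite /ctmx !mxE conjC0. Qed.
Lemma ctmx_diag n (d : 'rV[C]_n) : (forall i, 0 < d 0 i) -> ctmx (diag_mx d) = diag_mx d.
Proof.
move=> hd; apply/matrixP=> i j; rewrite /ctmx !mxE.
case: eqP => [->|ne1]; case: eqP => [e|ne2] //=.
- by rewrite !mulr1n conj_Creal // gtr0_real.
- by case: ne1; rewrite e.
- by rewrite !mulr0n conjC0.
Qed.

Lemma pos_zero n k (d : 'rV[C]_n) (W : 'M[C]_(n,k)) : (forall i, 0 < d 0 i) ->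
  ctmx W *m diag_mx d *m W = 0 -> W = 0.
Proof.
move=> hd H; apply/matrixP=> i j.
have := congr1 (fun A : 'M[C]_k => A j j) H; rewrite /= mul_mx_diag mxE.
under eq_bigr => l _ do rewrite mxE /ctmx !mxE mulrAC [_^* * _]mulrC -normCK.
rewrite !mxE => h.
have hnn : forall l, xpredT l -> 0 <= `|W l j| ^+ 2 * d 0 l.
  by move=> l _; rewrite mulr_ge0 // ?exprn_ge0 // ltW.
have := psumr_eq0P hnn h (i:=i) isT.
move=> /eqP; rewrite mulf_eq0 (gt_eqF (hd i)) orbF expf_eq0 /= normr_eq0 => /eqP //.
Qed.

Lemma core m N (Lam : 'M[C]_(m,N)) (G : 'M[C]_(N,m)) (pi X : 'M[C]_N)
  (hpi : ctmx pi = pi) (hk : forall Z : 'M[C]_N, ctmx Z *m pi *m Z = 0 -> Z = 0)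
  (hG : is_MPinv Lam G)
  (hX : is_MPinv ((1%:M - G *m Lam) *m pi *m (1%:M - G *m Lam)) X) :
  Lam *m (G - X *m pi *m (G *m Lam) *m G) *m Lam = Lam /\
  pi *m (G - X *m pi *m (G *m Lam) *m G) *m Lam =
    ctmx Lam *m ctmx (G - X *m pi *m (G *m Lam) *m G) *m pi.
Proof.
case: hG => g1 g2 g3 g4.
set M := G *m Lam. set P := 1%:M - M. set Y := P *m pi *m P.
case: hX; rewrite -/M -/P -/Y => x1 x2 x3 x4.
have MM : M *m M = M by rewrite /M !mulmxA g2.
have hP : ctmx P = P by rewrite /P ctmxB ctmx1 g3.
have PP : P *m P = P.
  by rewrite /P mulmxBl mul1mx mulmxBr mulmx1 MM subrr subr0.
have LP : Lam *m P = 0 by rewrite /P mulmxBr mulmx1 /M mulmxA g1 subrr.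
have hY : ctmx Y = Y by rewrite /Y !ctmxM hP hpi mulmxA.
have YP : Y *m P = Y by rewrite /Y -mulmxA PP.
have PY : P *m Y = Y by rewrite /Y !mulmxA PP.
have kill : forall Z : 'M[C]_N, P *m Z = Z -> Y *m Z = 0 -> Z = 0.
  move=> Z hZ hYZ; apply: (hk Z).
  have -> : ctmx Z = ctmx Z *m P by rewrite -{1}hZ ctmxM hP.
  have -> : ctmx Z *m P *m pi *m Z = ctmx Z *m (Y *m Z) by rewrite /Y -(mulmxA _ P Z) hZ !mulmxA.
  by rewrite hYZ mulmx0.
have XY : X *m Y = P.
  suff: P - X *m Y = 0 by move/eqP; rewrite subr_eq0 => /eqP <-.
  apply: kill.
    by rewrite mulmxBr PP; congr (_ - _); rewrite -x3 ctmxM hY mulmxA PY -hY -ctmxM x3.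
  by rewrite mulmxBr YP mulmxA x1 subrr.
have YX : Y *m X = P.
  suff: P - Y *m X = 0 by move/eqP; rewrite subr_eq0 => /eqP <-.
  apply: kill.
    by rewrite mulmxBr PP mulmxA PY.
  have h : ctmx (P - Y *m X) = P - Y *m X by rewrite ctmxB hP x4.
  by rewrite -h -{1}hY -ctmxM mulmxBl PY x1 subrr ctmx0.
have XP : X *m P = X by rewrite -{2}x2 -mulmxA YX.
have Xh : ctmx X = X.
  have cXP : ctmx X = P *m ctmx X by rewrite -{1}XP ctmxM hP.
  have YcX : Y *m ctmx X = P by rewrite -hY -ctmxM XY hP.
  by rewrite -{2}XP -YcX mulmxA XY -cXP.
have hM : M = 1%:M - P by rewrite /P opprB addrC subrK.
have XpiM : X *m pi *m M = X *m pi - P.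
  rewrite hM mulmxBr mulmx1; congr (_ - _).
  by rewrite -{1}XP -(mulmxA X P pi) -(mulmxA X (P *m pi) P) XY.
have hA : (G - X *m pi *m M *m G) *m Lam = 1%:M - X *m pi.
  rewrite mulmxBl -/M -(mulmxA _ G Lam) -/M -(mulmxA _ M M) MM XpiM.
  by rewrite /P opprB addrA [M + _]addrC subrK.
have LX : Lam *m X = 0 by rewrite -{1}x2 XY mulmxA LP mul0mx.
split.
  by rewrite -mulmxA hA mulmxBr mulmx1 mulmxA LX mul0mx subr0.
rewrite -mulmxA hA -ctmxM hA ctmxB ctmx1 ctmxM hpi Xh.
by rewrite mulmxBr mulmxBl mulmx1 mul1mx mulmxA.
Qed.
End H.

Theorem mainTheorem2 (C : numClosedFieldType) (m N : nat)
  (Lambda : 'M[C]_(m, N)) (d : 'rV[C]_N)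
  (hd : forall i : 'I_N, 0 < d 0 i)
  (Gmp : 'M[C]_(N, m)) (hGmp : is_MPinv Lambda Gmp)
  (Xdd : 'M[C]_N)
  (hXdd : is_MPinv ((1%:M - Gmp *m Lambda) *m diag_mx d *m (1%:M - Gmp *m Lambda)) Xdd) :
  let pi := diag_mx d in
  let M := Gmp *m Lambda in
  let Gopt := Gmp - Xdd *m pi *m M *m Gmp in
  Lambda *m Gopt *m Lambda = Lambda /\
  pi *m Gopt *m Lambda = ctmx Lambda *m ctmx Gopt *m pi.
Proof.
move=> pi M Gopt; rewrite /Gopt /M /pi.
exact: (@core C m N Lambda Gmp (diag_mx d) Xdd (@ctmx_diag C N d hd) (fun Z => @pos_zero C N N d Z hd) hGmp hXdd).
Qed.
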